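(* Let $M$ be a singular $n\times n$ matrix with all entries in $\{-1,+1\}$. Then there exist a novel partition $\lambda$ of length at most $n$ and a vector $v\in V^{(n)}_\lambda$ with $vM=0$ (i.e. $v$ is a left null vector of $M$).
   Context: An integer partition is $\lambda=(\lambda_1,\dots,\lambda_k)$ with integers $\lambda_1\ge\dots\ge\lambda_k\ge 1$; $k$ is its length. For $v\in\mathbb{Z}^k$ let $v^{\perp B}=\{x\in\{-1,1\}^k: v\cdot x=0\}$ (the Bernoulli orthogonal complement); for a partition $\lambda$, $\lambda^{\perp B}$ means this set for the vector $(\lambda_1,\dots,\lambda_k)$. $V_\lambda\subset\mathbb{Z}^k$ is the set of vectors obtained from $(\lambda_1,\dots,\lambda_k)$ by permuting the coordinates and changing the signs of some coordinates, subject to the first coordinate being positive. For $n\ge k$, $V_\lambda^{(n)}\subset\mathbb{Z}^n$ is the set of vectors with exactly $k$ nonzero coordinates which, read in increasing order of index, form a vector of $V_\lambda$. For $I\subset\{1,\dots,m\}$, $\mathrm{Proj}_I:\{-1,1\}^m\to\{-1,1\}^{|I|}$ keeps the coordinates indexed by $I$ (in increasing order). Reduction: for partitions $\mu$ of length $m$ and $\lambda$ of length $k\le m$, write $\mu\Rightarrow\lambda$ iff there exist $I\subset\{1,\dots,m\}$ with $|I|=k$ and $v\in V_\lambda$ such that $\mathrm{Proj}_I(\mu^{\perp B})\subset v^{\perp B}$ (when $k=m$ this means $\mu^{\perp B}\subset v^{\perp B}$). Strict reduction: $\mu$ strictly reduces to $\lambda$ iff $\mu\Rightarrow\lambda$ and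 not $\lambda\Rightarrow\mu$. Equivalence: partitions $\lambda,\mu$ of the same length are equivalent iff there is $w\in V_\mu$ with $\lambda^{\perp B}=w^{\perp B}$. A partition $\lambda$ is novel iff $\lambda^{\perp B}\neq\emptyset$, there is no partition $\lambda'$ to which $\lambda$ strictly reduces, and $\lambda$ is lexicographically smallest (comparing $(\lambda_1,\lambda_2,\dots)$) among all partitions equivalent to it. *)

(* Defs.v *)
From HB Require Import structures.
From mathcomp Require Import all_boot all_order all_algebra.
Set Implicit Arguments. Unset Strict Implicit. Unset Printing Implicit Defensive.
Import Order.TTheory GRing.Theory Num.Theory.
Local Open Scope ring_scope.

Definition is_partition (lam : seq nat) : bool :=
  sorted geq lam && all (fun a => (0 < a)%N) lam.

Definition pvec (lam : seq nat) : seq int := [seq (a%:Z) | a <- lam].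

Definition dot (v x : seq int) : int := \sum_(p <- zip v x) p.1 * p.2.

Definition in_bperp (v x : seq int) : bool :=
  [&& size x == size v, all (fun a => (a == 1) || (a == -1)) x & dot v x == 0].

(* w belongs to V_lam: w is obtained from lam by permuting coordinates and
   changing signs of some coordinates, with first coordinate positive. *)
Definition inV (lam : seq nat) (w : seq int) : bool :=
  perm_eq [seq absz z | z <- w] lam && (0 < head 0 w).

Definition inVn (n : nat) (lam : seq nat) (w : seq int) : bool :=
  [&& size w == n, count (fun z => z != 0) w == size lam
    & inV lam [seq z <- w | z != 0]].

(* Reduction mu => lam.  The index set I subset {1..m} with |I| = k is encoded
   as a bit mask of size m with k ones; Proj_I is [mask I _]. *)
Definition reduces (mu lam : seq nat) : Prop :=
  (size lam <= size mu)%N /\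
  exists (I : bitseq) (v : seq int),
    [/\ size I = size mu, count id I = size lam, inV lam v &
        forall x : seq int, in_bperp (pvec mu) x -> in_bperp v (mask I x)].

Definition strictly_reduces (mu lam : seq nat) : Prop :=
  reduces mu lam /\ ~ reduces lam mu.

Definition equivalent (lam mu : seq nat) : Prop :=
  size lam = size mu /\
  exists w : seq int, inV mu w /\ forall x : seq int, in_bperp (pvec lam) x = in_bperp w x.

Fixpoint lexle (s t : seq nat) : bool :=
  match s, t with
  | [::], _ => true
  | _ :: _, [::] => false
  | a :: s', b :: t' => (a < b)%N || ((a == b) && lexle s' t')
  end.

Definition novel (lam : seq nat) : Prop :=
  [/\ is_partition lam,
      exists x : seq int, in_bperp (pvec lam) x,
      ~ (exists lam' : seq nat, is_partition lam' /\ strictly_reduces lam lam') &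
      forall mu : seq nat, is_partition mu -> equivalent lam mu -> lexle lam mu].

(* Main.v *)
Require Import Defs.
From HB Require Import structures.
From mathcomp Require Import all_boot all_order all_algebra.
From Stdlib Require Import Classical.
From mathcomp Require Import zify.
Import GRing.Theory Num.Theory.
Local Open Scope ring_scope.
Set Implicit Arguments. Unset Strict Implicit.

Lemma dotE (u x : seq int) : size u = size x ->
  dot u x = \sum_(j < size u) u`_j * x`_j.
Proof.
elim: u x => [|a u IH] [|b x] //= Hs.
  by rewrite /dot big_nil big_ord0.
case: Hs => Hs.
by rewrite /dot /= big_cons big_ord_recl /= -IH.
Qed.

Lemma sum_pick n k (h : nat -> 'I_n) (F : nat -> int) j0 :
  (forall i j, (i < k)%N -> (j < k)%N -> h i = h j -> i = j) -> (j0 < k)%N ->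
  \sum_(j < k) (if h j == h j0 then F j else 0) = F j0.
Proof.
move=> Hinj Hj0.
rewrite (bigD1 (Ordinal Hj0)) //= eqxx big1 ?addr0 // => i Hi.
case: eqP => // /(Hinj _ _ (ltn_ord i) Hj0) E.
by move: Hi; rewrite -val_eqE /= E eqxx.
Qed.

Lemma sum_none n k (h : nat -> 'I_n) (F : nat -> int) p :
  (forall j, (j < k)%N -> h j != p) ->
  \sum_(j < k) (if h j == p then F j else 0) = 0.
Proof.
move=> H; rewrite big1 // => i _.
by rewrite (negbTE (H _ (ltn_ord i))).
Qed.

Definition pm1 (z : int) : bool := (z == 1) || (z == -1).

Definition Rep n (r : 'I_n -> int) (u : seq int) : Prop :=
  exists (h : nat -> 'I_n) (e : nat -> int),
  [/\ (forall i j, (i < size u)%N -> (j < size u)%N -> h i = h j -> i = j),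
      (forall j, pm1 (e j)) &
      forall p, r p = \sum_(j < size u) (if h j == p then e j * u`_j else 0)].
Arguments Rep {n}.

Lemma rep_dot n (r : 'I_n -> int) u (h : nat -> 'I_n) (e : nat -> int) (c : 'I_n -> int) :
  (forall p, r p = \sum_(j < size u) (if h j == p then e j * u`_j else 0)) ->
  \sum_p r p * c p = dot u [seq e j * c (h j) | j <- iota 0 (size u)].
Proof.
move=> Hr.
rewrite dotE ?size_map ?size_iota //.
under eq_bigr do rewrite Hr mulr_suml.
rewrite exchange_big /=; apply: eq_bigr => j _.
rewrite (nth_map 0%N) ?size_iota // nth_iota // add0n.
rewrite (bigD1 (h j)) //= eqxx big1 ?addr0; first by rewrite mulrCA mulrA.
by move=> p; rewrite eq_sym => /negbTE ->; rewrite mul0r.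
Qed.
Definition sg (z : int) : int := if z < 0 then -1 else 1.

Lemma sg_abs z : sg z * (absz z)%:Z = z.
Proof.
rewrite /sg; case: ltrP => Hz.
  by rewrite ltz0_abs // mulN1r opprK.
by rewrite gez0_abs // mul1r.
Qed.

Lemma pm1_mul a b : pm1 a -> pm1 b -> pm1 (a * b).
Proof.
by rewrite /pm1 => /orP [] /eqP -> /orP [] /eqP ->; rewrite ?mulN1r ?mul1r ?opprK ?eqxx ?orbT.
Qed.

Lemma pm1_sg z : pm1 (sg z).
Proof. by rewrite /pm1 /sg; case: ifP; rewrite eqxx ?orbT. Qed.

Lemma sum_iota_perm (F : nat -> int) {Is : seq nat} {k} :
  perm_eq Is (iota 0 k) ->
  \sum_(j < k) F j = \sum_(l < k) F (nth 0%N Is l).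
Proof.
move=> HIs.
have Hs : size Is = k by rewrite (perm_size HIs) size_iota.
rewrite -(big_mkord (fun _ => true)) /index_iota subn0 -(perm_big _ HIs).
by rewrite (big_nth 0%N) Hs (big_mkord (fun _ => true)).
Qed.

Lemma rep_perm n (r : 'I_n -> int) u (lam : seq nat) :
  Rep r u -> perm_eq [seq absz z | z <- u] lam -> Rep r (pvec lam).
Proof.
case=> h [e [Hinj He Hr]] Hp.
have /(perm_iotaP 0%N) [Is HIs Hl] : perm_eq lam (map absz u) by rewrite perm_sym.
rewrite size_map in HIs.
have HsIs : size Is = size u by rewrite (perm_size HIs) size_iota.
have Hsl : size (pvec lam) = size u by rewrite /pvec Hl !size_map.
have HuIs : uniq Is by rewrite (perm_uniq HIs) iota_uniq.
have HmIs l : (l < size u)%N -> (nth 0%N Is l < size u)%N.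
  move=> Hl0; have : nth 0%N Is l \in Is by rewrite mem_nth // HsIs.
  by rewrite (perm_mem HIs) mem_iota.
exists (fun l => h (nth 0%N Is l)),
  (fun l => e (nth 0%N Is l) * sg u`_(nth 0%N Is l)); split.
- rewrite Hsl => i j Hi Hj /(Hinj _ _ (HmIs _ Hi) (HmIs _ Hj)) /eqP.
  by rewrite nth_uniq ?HsIs // => /eqP.
- by move=> j; apply: pm1_mul; [apply: He | apply: pm1_sg].
- move=> p; rewrite Hr Hsl (sum_iota_perm (fun j => if h j == p then e j * u`_j else 0) HIs); apply: eq_bigr => l _.
  case: ifP => // _.
  rewrite /pvec Hl (nth_map 0%N) ?size_map ?HsIs //.
  rewrite (nth_map 0%N) ?size_map //.
  rewrite (nth_map 0) ?HmIs //.
  by rewrite -mulrA sg_abs.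
  by rewrite HsIs.
Qed.
Lemma rep_reduce n (M : 'M[int]_n) (r : 'I_n -> int) lam I v :
  (forall i j, pm1 (M i j)) ->
  Rep r (pvec lam) -> (forall col, \sum_p r p * M p col = 0) ->
  size I = size lam -> count id I = size v ->
  (forall x, in_bperp (pvec lam) x -> in_bperp v (mask I x)) ->
  exists r' : 'I_n -> int, Rep r' v /\ forall col, \sum_p r' p * M p col = 0.
Proof.
move=> HM [h [e [Hinj He Hr]]] Hz HsI HcI Hred.
have Hk : size (pvec lam) = size lam by rewrite size_map.
set k := size (pvec lam) in Hinj Hr Hk.
set G := mask I (iota 0 k).
have HG : size G = size v by rewrite /G size_mask // size_iota Hk.
have HuG : uniq G by rewrite mask_uniq // iota_uniq.
have HmG i : (i < size v)%N -> (nth 0%N G i < k)%N.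
  move=> Hi; have : nth 0%N G i \in G by rewrite mem_nth // HG.
  by move/mem_mask; rewrite mem_iota.
exists (fun p => \sum_(i < size v) (if h (nth 0%N G i) == p then e (nth 0%N G i) * v`_i else 0)).
split.
  exists (fun i => h (nth 0%N G i)), (fun i => e (nth 0%N G i)); split => //.
  move=> i j Hi Hj /(Hinj _ _ (HmG _ Hi) (HmG _ Hj)) /eqP.
  by rewrite nth_uniq ?HG // => /eqP.
move=> col.
rewrite (@rep_dot n _ v (fun i => h (nth 0%N G i)) (fun i => e (nth 0%N G i))) //.
set F := fun j => e j * M (h j) col.
have Hx : in_bperp (pvec lam) [seq F j | j <- iota 0 k].
  apply/and3P; split.
  - by rewrite size_map size_iota.
  - apply/allP => z /mapP [j _ ->]; exact: pm1_mul.
  - by rewrite -(@rep_dot n r _ h e (fun p => M p col) Hr) Hz.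
have /and3P [_ _ /eqP] := Hred _ Hx.
rewrite -map_mask -/G -{1}(mkseq_nth 0%N G) HG /mkseq -map_comp.
by [].
Qed.
Lemma pm1_neq0 z : pm1 z -> z != 0.
Proof. by case/orP => /eqP ->. Qed.

Lemma absz_pm1 a b : pm1 a -> absz (a * b) = absz b.
Proof. by case/orP => /eqP ->; rewrite ?mul1r ?mulN1r ?abszN. Qed.

Lemma rep_pattern n (r : 'I_n -> int) u : Rep r u -> all (fun z => z != 0) u ->
  count (fun z => z != 0) [seq r p | p <- enum 'I_n] = size u /\
  perm_eq [seq absz z | z <- [seq z <- [seq r p | p <- enum 'I_n] | z != 0]]
          [seq absz z | z <- u].
Proof.
move=> [h [e [Hinj He Hr]]] Hu.
set k := size u in Hinj Hr *.
have Hval j : (j < k)%N -> r (h j) = e j * u`_j.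
  by move=> Hj; rewrite Hr (@sum_pick n k h (fun j => e j * u`_j) j Hinj Hj).
have Hnz j : (j < k)%N -> e j * u`_j != 0.
  move=> Hj; rewrite mulf_eq0 negb_or pm1_neq0 //=.
  exact: (allP Hu) (mem_nth 0 Hj).
set A := [seq p <- enum 'I_n | r p != 0].
set B := [seq h j | j <- iota 0 k].
have HAB : perm_eq A B.
  apply: uniq_perm.
  - by rewrite filter_uniq // enum_uniq.
  - rewrite map_inj_in_uniq ?iota_uniq // => i j; rewrite !mem_iota /= !add0n.
    exact: Hinj.
  - move=> p; rewrite mem_filter mem_enum andbT.
    apply/idP/idP.
    + move=> Hp; apply/negPn; apply: contra Hp => HpB; apply/eqP.
      rewrite Hr (@sum_none n k h (fun j => e j * u`_j)) // => j Hj.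
      apply/negP => /eqP E; move/negP: HpB; apply.
      by rewrite -E map_f // mem_iota.
    + by case/mapP => j; rewrite mem_iota /= add0n => Hj ->; rewrite Hval // Hnz.
have Hf : [seq z <- [seq r p | p <- enum 'I_n] | z != 0] = [seq r p | p <- A].
  by rewrite filter_map.
split.
  by rewrite -size_filter Hf size_map (perm_size HAB) size_map size_iota.
rewrite Hf -map_comp; apply: (perm_trans (perm_map _ HAB)); rewrite -map_comp.
rewrite -{1}(mkseq_nth 0 u) /mkseq -map_comp.
have E (f g : nat -> nat) : {in iota 0 k, f =1 g} ->
    perm_eq (map f (iota 0 k)) (map g (iota 0 k)) by move=> /eq_in_map ->.
apply: E => j; rewrite mem_iota /= add0n => Hj.
by rewrite /= Hval // absz_pm1.
Qed.
Definition Sgood {n} (M : 'M[int]_n) (lam : seq nat) : Prop :=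
  [/\ is_partition lam, (size lam <= n)%N &
      exists v : 'rV[int]_n, inVn n lam [seq v 0 j | j <- enum 'I_n] /\ v *m M = 0].

Lemma mulmx0E n (M : 'M[int]_n) (v : 'rV[int]_n) :
  v *m M = 0 <-> forall col, \sum_p v 0 p * M p col = 0.
Proof.
split.
  by move=> H col; move/matrixP: H => /(_ 0 col); rewrite !mxE.
move=> H; apply/matrixP => i j; rewrite !mxE (ord1 i); exact: H.
Qed.

Lemma vec_ok n (M : 'M[int]_n) (r : 'I_n -> int) lam :
  count (fun z => z != 0) [seq r p | p <- enum 'I_n] = size lam ->
  perm_eq [seq absz z | z <- [seq z <- [seq r p | p <- enum 'I_n] | z != 0]] lam ->
  (0 < size lam)%N -> (forall col, \sum_p r p * M p col = 0) ->
  exists v : 'rV[int]_n, inVn n lam [seq v 0 j | j <- enum 'I_n] /\ v *m M = 0.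
Proof.
move=> Hc Hp Hs Hz.
set u := [seq z <- [seq r p | p <- enum 'I_n] | z != 0] in Hp.
have Hsu : size u = size lam by rewrite size_filter.
have Hhu : head 0 u != 0.
  case E : u Hsu => [|a u'] /=; first by move=> H; rewrite -H in Hs.
  move=> _; have : a \in u by rewrite E mem_head.
  by rewrite mem_filter => /andP [].
case: (ltrP 0 (head 0 u)) => Hh.
  exists (\row_p r p); split; last first.
    by apply/mulmx0E => col; rewrite -[RHS](Hz col); apply: eq_bigr => p _; rewrite mxE.
  have -> : [seq (\row_p r p) 0 j | j <- enum 'I_n] = [seq r p | p <- enum 'I_n].
    by apply: eq_map => p; rewrite mxE.
  apply/and3P; split; rewrite ?size_map ?Hc //; first by rewrite -enumT size_enum_ord.
  by apply/andP.
exists (\row_p - r p); split; last first.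
  apply/mulmx0E => col.
  under eq_bigr do rewrite mxE mulNr.
  by rewrite sumrN Hz oppr0.
have -> : [seq (\row_p - r p) 0 j | j <- enum 'I_n] = [seq - z | z <- [seq r p | p <- enum 'I_n]].
  by elim: (enum 'I_n) => //= p s ->; rewrite mxE.
have Hf : [seq z <- [seq - z | z <- [seq r p | p <- enum 'I_n]] | z != 0] = [seq - z | z <- u].
  by rewrite filter_map; congr map; apply: eq_filter => z /=; rewrite oppr_eq0.
apply/and3P; split.
- by rewrite !size_map -enumT size_enum_ord.
- by rewrite -size_filter Hf size_map Hsu.
- rewrite Hf; apply/andP; split.
    suff -> : [seq absz z | z <- [seq - z | z <- u]] = [seq absz z | z <- u] by [].
    by elim: (u) => //= z s ->; rewrite abszN.
  case: u Hh Hhu {Hp Hsu Hf} => [|a u'] //= Hh Hhu.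
  by rewrite oppr_gt0 Order.POrderTheory.lt_neqAle Hhu Hh.
Qed.
Lemma S_rep n (M : 'M[int]_n) lam : Sgood M lam ->
  exists r : 'I_n -> int, Rep r (pvec lam) /\ forall col, \sum_p r p * M p col = 0.
Proof.
case=> Hpart Hsz [v [/and3P [_ _ /andP [Hperm Hhead]] /mulmx0E Hz]].
set A := [seq p <- enum 'I_n | v 0 p != 0].
set u := [seq z <- [seq v 0 j | j <- enum 'I_n] | z != 0] in Hperm Hhead.
have Hu : u = [seq v 0 p | p <- A] by rewrite /u filter_map.
have [p0 _] : exists p0 : 'I_n, True.
  move: Hhead; rewrite Hu; case: (A) => [|p0 A'] //=.
have HuA : uniq A by rewrite filter_uniq // enum_uniq.
have HsA : size u = size A by rewrite Hu size_map.
exists (fun p => v 0 p); split => //.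
apply: (@rep_perm n _ u lam _ Hperm).
exists (fun j => nth p0 A j), (fun _ => 1); split.
- rewrite HsA => i j Hi Hj /eqP; rewrite nth_uniq // => /eqP //.
- by move=> _; rewrite /pm1 eqxx.
- move=> p; case: (boolP (p \in A)) => Hp.
    symmetry; rewrite {1}(_ : p = nth p0 A (index p A)); last by rewrite nth_index.
    rewrite (@sum_pick n (size u) (fun j => nth p0 A j) (fun j => 1 * u`_j)).
    + by rewrite mul1r Hu (nth_map p0) ?index_mem // nth_index.
    + rewrite HsA => i j Hi Hj /eqP; rewrite nth_uniq // => /eqP //.
    + by rewrite HsA index_mem.
  rewrite (@sum_none n (size u) (fun j => nth p0 A j) (fun j => 1 * u`_j)).
    by move: Hp; rewrite mem_filter mem_enum andbT negbK => /eqP.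
  move=> j; rewrite HsA => Hj; apply/eqP => E; move: Hp; rewrite -E.
  by rewrite mem_nth.
Qed.

Lemma pos_nz (w : seq int) lam : is_partition lam ->
  perm_eq [seq absz z | z <- w] lam -> all (fun z => z != 0) w.
Proof.
case/andP => _ /allP Hpos Hp; apply/allP => z Hz.
have : absz z \in lam by rewrite -(perm_mem Hp) map_f.
by move/Hpos; rewrite absz_gt0.
Qed.

Lemma rep_S n (M : 'M[int]_n) (r : 'I_n -> int) (w : seq int) lam :
  is_partition lam -> (size lam <= n)%N -> (0 < size lam)%N ->
  perm_eq [seq absz z | z <- w] lam -> Rep r w ->
  (forall col, \sum_p r p * M p col = 0) -> Sgood M lam.
Proof.
move=> Hpart Hsz Hs0 Hp Hrep Hz; split => //.
have [Hc Hp'] := rep_pattern Hrep (pos_nz Hpart Hp).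
have Hsw : size w = size lam by rewrite -(size_map absz) (perm_size Hp).
apply: (vec_ok (r := r)) => //; first by rewrite Hc.
exact: perm_trans Hp' Hp.
Qed.

Lemma S_transfer n (M : 'M[int]_n) lam lam' :
  (forall i j, pm1 (M i j)) ->
  Sgood M lam -> reduces lam lam' -> is_partition lam' -> Sgood M lam'.
Proof.
move=> HM HS [Hsz [I [v [HsI HcI /andP [Hperm Hhead] Hred]]]] Hpart.
have [r [Hrep Hz]] := S_rep HS.
have Hsv : size v = size lam' by rewrite -(size_map absz) (perm_size Hperm).
have [r' [Hrep' Hz']] := rep_reduce HM Hrep Hz HsI (etrans HcI (esym Hsv)) Hred.
apply: (rep_S (r := r')) Hpart _ _ Hperm Hrep' Hz'.
  by case: HS => _ H _; exact: leq_trans Hsz H.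
by rewrite -Hsv; case: (v) Hhead => //=; rewrite ltxx.
Qed.
Fixpoint signs (k : nat) : seq (seq int) :=
  if k is k'.+1 then [seq 1 :: s | s <- signs k'] ++ [seq -1 :: s | s <- signs k']
  else [:: [::]].

Lemma mem_signs k x : (x \in signs k) = (size x == k) && all pm1 x.
Proof.
elim: k x => [|k IH] [|a x] //=.
  by rewrite mem_cat; apply/negP => /orP [] /mapP [].
rewrite mem_cat eqSS.
apply/idP/idP.
  case/orP => /mapP [s Hs [-> ->]]; move: Hs; rewrite IH => /andP [-> ->];
    by rewrite /pm1 eqxx ?orbT.
case/andP => Hs /andP [Ha Hx].
case/orP: Ha => /eqP ->; [apply/orP; left | apply/orP; right];
  by apply/mapP; exists x => //; rewrite IH Hs.
Qed.

Lemma uniq_signs k : uniq (signs k).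
Proof.
elim: k => //= k IH; rewrite cat_uniq !map_inj_uniq ?IH /=; last first.
- by move=> s t [].
- by move=> s t [].
rewrite andbT; by apply/hasPn => z /mapP [s _ ->]; apply/negP => /mapP [t _ []] /eqP.
Qed.

Lemma size_signs k : size (signs k) = (2 ^ k)%N.
Proof. by elim: k => //= k IH; rewrite size_cat !size_map IH expnS mul2n addnn. Qed.

Definition cnt (w : seq int) : nat := count (in_bperp w) (signs (size w)).

Lemma bperp_signs w x : in_bperp w x -> x \in signs (size w).
Proof. by case/and3P => Hs Ha _; rewrite mem_signs Hs Ha. Qed.

Lemma cnt_le_pow w : (cnt w <= 2 ^ size w)%N.
Proof. by rewrite /cnt -size_signs count_size. Qed.

Lemma cnt_sub a b : size a = size b ->
  (forall x, in_bperp a x -> in_bperp b x) -> (cnt a <= cnt b)%N.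
Proof. by move=> Hs H; rewrite /cnt Hs; apply: sub_count => x; apply: H. Qed.

Lemma count_sub_eq (T : eqType) (s : seq T) (a b : pred T) :
  (forall y, a y -> b y) -> count a s = count b s -> forall y, y \in s -> b y -> a y.
Proof.
move=> Hab; elim: s => //= z s IH Hc y.
have H1 := sub_count Hab s.
have Hz : (nat_of_bool (a z) <= b z)%N by case Ha: (a z) => //; rewrite (Hab _ Ha).
have [E1 E2] : count a s = count b s /\ nat_of_bool (a z) = b z by lia.
rewrite in_cons => /orP [/eqP -> | Hy Hb]; last exact: IH.
by case: (a z) (b z) E2 => [] [].
Qed.

Lemma cnt_eq a b : size a = size b ->
  (forall x, in_bperp a x -> in_bperp b x) -> cnt a = cnt b ->
  forall x, in_bperp b x -> in_bperp a x.
Proof.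
move=> Hs H Hc x Hb; rewrite /cnt Hs in Hc.
apply: (count_sub_eq H Hc) => //.
exact: bperp_signs.
Qed.

Lemma count_uniq_sub (T : eqType) (a : pred T) (s1 s2 : seq T) :
  uniq s1 -> {subset s1 <= s2} -> (count a s1 <= count a s2)%N.
Proof.
move=> Hu Hsub; rewrite -!size_filter; apply: uniq_leq_size.
  exact: filter_uniq.
by move=> x; rewrite !mem_filter => /andP [-> /Hsub].
Qed.
Lemma sg_sq z : sg z * sg z = 1.
Proof. by rewrite /sg; case: ifP; rewrite ?mulN1r ?opprK ?mul1r. Qed.

Lemma pm1_nth (x : seq int) i : all pm1 x -> (i < size x)%N -> pm1 x`_i.
Proof. by move=> /allP H Hi; apply: H; rewrite mem_nth. Qed.

Lemma cnt_perm (v : seq int) lam :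
  perm_eq [seq absz z | z <- v] lam -> (cnt v <= cnt (pvec lam))%N.
Proof.
move=> Hp.
have /(perm_iotaP 0%N) [Is HIs Hl] : perm_eq lam (map absz v) by rewrite perm_sym.
rewrite size_map in HIs.
have HsIs : size Is = size v by rewrite (perm_size HIs) size_iota.
have HmIs l : (l < size v)%N -> (nth 0%N Is l < size v)%N.
  move=> Hl0; have : nth 0%N Is l \in Is by rewrite mem_nth // HsIs.
  by rewrite (perm_mem HIs) mem_iota.
have Hmem j : (j < size v)%N -> j \in Is by move=> Hj; rewrite (perm_mem HIs) mem_iota.
have HuIs : uniq Is by rewrite (perm_uniq HIs) iota_uniq.
have Hsl : size (pvec lam) = size v by rewrite /pvec Hl !size_map.
have Hlam l : (l < size v)%N -> (pvec lam)`_l = (absz v`_(nth 0%N Is l))%:Z.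
  move=> Hl0; rewrite /pvec Hl (nth_map 0%N) ?size_map ?HsIs //.
  by rewrite (nth_map 0%N) ?size_map ?HsIs // (nth_map 0) ?HmIs.
pose T (x : seq int) := [seq sg v`_i * x`_i | i <- Is].
have HTn x l : (l < size v)%N -> (T x)`_l = sg v`_(nth 0%N Is l) * x`_(nth 0%N Is l).
  by move=> Hl0; rewrite /T (nth_map 0%N) ?HsIs.
have HTs x : x \in signs (size v) -> T x \in signs (size v).
  rewrite !mem_signs => /andP [/eqP Hs Ha]; rewrite size_map HsIs eqxx /=.
  apply/allP => z /mapP [i Hi ->]; apply: pm1_mul; first exact: pm1_sg.
  by apply: pm1_nth => //; rewrite Hs; move: Hi; rewrite (perm_mem HIs) mem_iota.
have HTd x : size x = size v -> dot (pvec lam) (T x) = dot v x.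
  move=> Hs; have Hsl2 : size lam = size v by rewrite -Hsl size_map.
  rewrite !dotE ?size_map ?Hsl2 ?HsIs ?Hs //.
  rewrite (sum_iota_perm (fun j => v`_j * x`_j) HIs); apply: eq_bigr => l _.
  rewrite Hlam // HTn // mulrA (mulrC _ (sg _)) sg_abs //.
have HTi : {in signs (size v) &, injective T}.
  move=> x y; rewrite !mem_signs => /andP [/eqP Hx _] /andP [/eqP Hy _] E.
  apply: (@eq_from_nth _ 0); rewrite ?Hx ?Hy // => j Hj.
  have Hi : (index j Is < size v)%N by rewrite -HsIs index_mem Hmem.
  have := congr1 (fun s => s`_(index j Is)) E; rewrite /= !HTn // nth_index ?Hmem //.
  by move=> /(congr1 (fun z => sg v`_j * z)); rewrite !mulrA sg_sq !mul1r.
rewrite /cnt Hsl.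
have -> : count (in_bperp v) (signs (size v)) =
          count (in_bperp (pvec lam)) (map T (signs (size v))).
  rewrite count_map; apply: eq_in_count => x Hx /=.
  have := HTs _ Hx; move: Hx; rewrite !mem_signs => /andP [/eqP Hs Ha] /andP [Hs' Ha'].
  by rewrite /in_bperp HTd // Hsl Hs' Ha' Hs Ha eqxx.
apply: count_uniq_sub; first by rewrite map_inj_in_uniq // uniq_signs.
by move=> y /mapP [x Hx ->]; apply: HTs.
Qed.
Lemma dotN (w y : seq int) : dot [seq - z | z <- w] y = - dot w y.
Proof.
elim: w y => [|a w IH] [|b y] //=; rewrite /dot /= ?big_nil ?oppr0 //.
by rewrite !big_cons -/(dot _ _) IH -/(dot _ _) opprD mulNr.
Qed.

Lemma rev_red (v : seq int) lam lam' :
  is_partition lam -> (0 < size lam)%N -> size lam = size lam' ->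
  perm_eq [seq absz z | z <- v] lam' ->
  (forall x, in_bperp v x -> in_bperp (pvec lam) x) ->
  exists w, inV lam w /\ forall y, in_bperp (pvec lam') y -> in_bperp w y.
Proof.
move=> Hpart Hk0 Hsz Hp Hvl.
have /(perm_iotaP 0%N) [Is HIs Hl] : perm_eq lam' (map absz v) by rewrite perm_sym.
rewrite size_map in HIs.
have Hsv : size v = size lam by rewrite Hsz -(perm_size Hp) size_map.
have HsIs : size Is = size v by rewrite (perm_size HIs) size_iota.
have HmIs l : (l < size v)%N -> (nth 0%N Is l < size v)%N.
  move=> Hl0; have : nth 0%N Is l \in Is by rewrite mem_nth // HsIs.
  by rewrite (perm_mem HIs) mem_iota.
have Hmem j : (j < size v)%N -> j \in Is by move=> Hj; rewrite (perm_mem HIs) mem_iota.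
have HuIs : uniq Is by rewrite (perm_uniq HIs) iota_uniq.
have Hlam' l : (l < size v)%N -> (pvec lam')`_l = (absz v`_(nth 0%N Is l))%:Z.
  move=> Hl0; rewrite /pvec Hl (nth_map 0%N) ?size_map ?HsIs //.
  by rewrite (nth_map 0%N) ?size_map ?HsIs // (nth_map 0) ?HmIs.
have Hlam l : (l < size v)%N -> (pvec lam)`_l = (nth 0%N lam l)%:Z.
  by move=> Hl0; rewrite /pvec (nth_map 0%N) // -Hsv.
pose w0 := [seq sg v`_i * (nth 0%N lam i)%:Z | i <- Is].
have Hsw0 : size w0 = size v by rewrite size_map.
have Hw0 y : in_bperp (pvec lam') y -> dot w0 y = 0.
  case/and3P => /eqP Hsy Hay /eqP Hdy.
  rewrite size_map -Hsz -Hsv in Hsy.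
  pose x := [seq sg v`_j * y`_(index j Is) | j <- iota 0 (size v)].
  have Hxn j : (j < size v)%N -> x`_j = sg v`_j * y`_(index j Is).
    by move=> Hj; rewrite /x (nth_map 0%N) ?size_iota // nth_iota.
  have Hx : in_bperp v x.
    apply/and3P; split.
    - by rewrite size_map size_iota.
    - apply/allP => z /mapP [j]; rewrite mem_iota /= add0n => Hj ->.
      apply: pm1_mul; first exact: pm1_sg.
      by apply: pm1_nth => //; rewrite Hsy -HsIs index_mem Hmem.
    - apply/eqP; rewrite -[RHS]Hdy dotE ?size_map ?size_iota //.
      rewrite (sum_iota_perm (fun j => v`_j * x`_j) HIs) dotE; last by rewrite size_map Hsy -Hsz -Hsv.
      rewrite size_map -Hsz -Hsv; apply: eq_bigr => l _.
      rewrite Hxn ?HmIs //.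
      rewrite index_uniq ?HsIs // Hlam' // mulrA.
      rewrite -{1}(sg_abs v`_(nth 0%N Is l)).
      by rewrite (mulrAC (sg _)) sg_sq mul1r.
  have /and3P [_ _ /eqP] := Hvl _ Hx.
  rewrite dotE ?size_map ?size_iota -?Hsv //.
  rewrite (sum_iota_perm (fun j => (pvec lam)`_j * x`_j) HIs) => H.
  rewrite -[RHS]H dotE ?Hsw0 ?Hsy //; apply: eq_bigr => l _.
  have Hl0 := ltn_ord l.
  rewrite Hxn ?HmIs //.
  rewrite index_uniq ?HsIs // Hlam ?HmIs // /w0 (nth_map 0%N) ?HsIs //.
  by rewrite mulrCA mulrA.
have Hperm0 : perm_eq [seq absz z | z <- w0] lam.
  apply/(perm_iotaP 0%N); exists Is; first by rewrite -Hsv.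
  rewrite -map_comp; apply: eq_map => i /=; by rewrite absz_pm1 ?pm1_sg.
have Hh0 : head 0 w0 != 0.
  case/andP: Hpart => _ /allP Hpos.
  have H0 : (0 < size v)%N by rewrite Hsv.
  rewrite -nth0 /w0 (nth_map 0%N) ?HsIs // mulf_eq0 negb_or pm1_neq0 ?pm1_sg //=.
  have Hi : (nth 0%N Is 0 < size lam)%N by rewrite -Hsv HmIs.
  by rewrite eqz_nat -lt0n; apply: Hpos; rewrite mem_nth.
case: (ltrP 0 (head 0 w0)) => Hh.
  exists w0; split; first by apply/andP.
  move=> y Hy; have := Hw0 _ Hy; case/and3P: Hy => Hs Ha _ Hd.
  apply/and3P; split; [| by [] | by apply/eqP].
  by move: Hs; rewrite /w0 !size_map HsIs Hsv Hsz.
exists [seq - z | z <- w0]; split.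
  apply/andP; split.
    suff -> : [seq absz z | z <- [seq - z | z <- w0]] = [seq absz z | z <- w0] by [].
    by elim: (w0) => //= z s ->; rewrite abszN.
  move: Hh Hh0; case: (w0) => [|a s] //= Hh Hh0.
  by rewrite oppr_gt0 Order.POrderTheory.lt_neqAle Hh0 Hh.
move=> y Hy; have := Hw0 _ Hy; case/and3P: Hy => Hs Ha _ Hd.
apply/and3P; split => //; last by rewrite dotN Hd oppr0.
by move: Hs; rewrite /w0 !size_map HsIs Hsv Hsz.
Qed.
Lemma nat_min (P : nat -> Prop) : (exists n, P n) ->
  exists m, P m /\ forall n, P n -> (m <= n)%N.
Proof.
move=> [n Hn]; apply: NNPP => H.
suff : forall k j, (j <= k)%N -> ~ P j by move/(_ n n (leqnn n)).
elim=> [|k IH] j Hj Pj; apply: H; exists j; split => // m Pm.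
  by move: Hj; rewrite leqn0 => /eqP ->.
case: (leqP j m) => // Hmj; exfalso; apply: (IH m) Pm.
by rewrite -ltnS; exact: leq_trans Hmj Hj.
Qed.

Lemma lexmin k (Q : seq nat -> Prop) : (forall t, Q t -> size t = k) ->
  (exists t, Q t) -> exists s, Q s /\ forall t, Q t -> lexle s t.
Proof.
elim: k Q => [|k IH] Q Hs [t0 Ht0].
  by exists t0; split => // t _; move: (Hs _ Ht0); case: t0 Ht0.
have Hex : exists a, exists t, Q (a :: t).
  by have := Hs _ Ht0; move: Ht0; case: t0 => // a t H _; exists a, t.
have [a0 [[s0 Ha0] Hmin]] := @nat_min (fun a => exists t, Q (a :: t)) Hex.
have [s' [Hs' Hmin']] := IH (fun t => Q (a0 :: t))
  (fun t Ht => eq_add_S _ _ (Hs _ Ht)) (ex_intro _ s0 Ha0).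
exists (a0 :: s'); split => // t Ht.
have := Hs _ Ht; move: Ht; case: t => [|b t'] //= Ht _.
have Hab : (a0 <= b)%N by apply: Hmin; exists t'.
rewrite leq_eqVlt in Hab; case/orP: Hab => [/eqP Eab | ->] //.
by rewrite Eab ltnn eqxx /=; apply: Hmin'; rewrite -Eab in Ht.
Qed.
Definition meas n (lam : seq nat) : nat :=
  (size lam * (2 ^ n).+1 + (2 ^ n - cnt (pvec lam)))%N.

Lemma S_pos n (M : 'M[int]_n) lam : Sgood M lam -> (0 < size lam)%N.
Proof.
case=> _ _ [v [/and3P [_ _ /andP [Hp Hh]] _]].
rewrite -(perm_size Hp) size_map.
by case: [seq z <- _ | _] Hh => //=; rewrite ltxx.
Qed.

Lemma S_cnt_le n (M : 'M[int]_n) lam : Sgood M lam -> (cnt (pvec lam) <= 2 ^ n)%N.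
Proof.
case=> _ Hsz _; apply: leq_trans (cnt_le_pow _) _.
by apply: leq_pexp2l => //; rewrite size_map.
Qed.

Lemma mask_all (I : bitseq) (x : seq int) : size I = size x -> all id I -> mask I x = x.
Proof.
elim: I x => [|b I IH] [|a x] //= [Hs] /andP [Hb HI].
by rewrite Hb IH.
Qed.

Lemma reduces_full lam mu w : size mu = size lam -> inV mu w ->
  (forall x, in_bperp (pvec lam) x -> in_bperp w x) -> reduces lam mu.
Proof.
move=> Hs Hw H; split; first by rewrite Hs.
exists (nseq (size lam) true), w; split => //.
- by rewrite size_nseq.
- by rewrite count_nseq mul1n.
- move=> x Hx; rewrite mask_true; first exact: H.
  by case/and3P: Hx => /eqP -> _ _; rewrite size_map.
Qed.

Lemma S_bperp n (M : 'M[int]_n) lam : (forall i j, pm1 (M i j)) ->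
  Sgood M lam -> exists x, in_bperp (pvec lam) x.
Proof.
move=> HM HS; have [r [[h [e [Hinj He Hr]]] Hz]] := S_rep HS.
exists [seq e j * M (h j) (h 0%N) | j <- iota 0 (size (pvec lam))].
apply/and3P; split.
- by rewrite size_map size_iota.
- by apply/allP => z /mapP [j _ ->]; apply: pm1_mul.
- by rewrite -(@rep_dot n r _ h e (fun p => M p (h 0%N)) Hr) Hz.
Qed.

Section Main.
Variables (n : nat) (M : 'M[int]_n).
Hypothesis HM : forall i j, pm1 (M i j).

Lemma min_nostrict lam : Sgood M lam ->
  (forall mu, Sgood M mu -> (meas n lam <= meas n mu)%N) ->
  ~ exists lam', is_partition lam' /\ strictly_reduces lam lam'.
Proof.
move=> HS Hmin [lam' [Hpart' [Hred Hnred]]].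
have HS' := S_transfer HM HS Hred Hpart'.
have Hm := Hmin _ HS'.
have Hc := S_cnt_le HS; have Hc' := S_cnt_le HS'.
case: Hred => Hsz [I [v [HsI HcI /andP [Hperm Hhead] Hred]]].
have Hsv : size v = size lam' by rewrite -(size_map absz) (perm_size Hperm).
move: Hm; rewrite /meas; case: (ltngtP (size lam') (size lam)) => Hlt Hm.
- have H1 : ((size lam').+1 * (2 ^ n).+1 <= size lam * (2 ^ n).+1)%N.
    by rewrite leq_mul2r Hlt orbT.
  move: H1 Hm; rewrite mulSn; lia.
- by move: Hsz; rewrite leqNgt Hlt.
- apply: Hnred.
  have HI : all id I by rewrite all_count HcI HsI Hlt.
  have Hred' x : in_bperp (pvec lam) x -> in_bperp v x.
    move=> Hx; have -> : x = mask I x.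
      by rewrite mask_all //; case/and3P: Hx => /eqP -> _ _; rewrite size_map.
    exact: Hred.
  have Hs1 : size (pvec lam) = size v by rewrite size_map Hsv Hlt.
  have C1 := cnt_sub Hs1 Hred'.
  have C2 := cnt_perm Hperm.
  have Hce : cnt (pvec lam) = cnt v.
    apply/eqP; rewrite eqn_leq C1 /=; apply: leq_trans C2 _.
    move: Hm; rewrite Hlt; lia.
  have Hrev := cnt_eq Hs1 Hred' Hce.
  have [w [Hw Hwy]] := rev_red (proj1 (and3_rect (fun a b c => conj a (conj b c)) HS))
    (S_pos HS) (esym Hlt) Hperm Hrev.
  exact: reduces_full (esym Hlt) Hw Hwy.
Qed.

Lemma min_equiv lam : Sgood M lam ->
  (forall mu, Sgood M mu -> (meas n lam <= meas n mu)%N) ->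
  forall mu, is_partition mu -> equivalent lam mu ->
  [/\ Sgood M mu, meas n mu = meas n lam & size mu = size lam].
Proof.
move=> HS Hmin mu Hpart [Hsz [w [Hw Heq]]].
have Hred : reduces lam mu.
  by apply: (reduces_full (esym Hsz) Hw) => x; rewrite Heq.
have HS' := S_transfer HM HS Hred Hpart.
case/andP: Hw => Hperm _.
have Hsw : size w = size mu by rewrite -(size_map absz) (perm_size Hperm).
have Hs1 : size (pvec lam) = size w by rewrite size_map Hsw.
have Hsub x : in_bperp (pvec lam) x -> in_bperp w x by rewrite Heq.
have C1 := cnt_sub Hs1 Hsub.
have C2 := cnt_perm Hperm.
have Hm := Hmin _ HS'.
split => //.
apply/eqP; rewrite eqn_leq Hm andbT.
move: Hm; rewrite /meas Hsz => _.
have : (cnt (pvec lam) <= cnt (pvec mu))%N by exact: leq_trans C1 C2.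
lia.
Qed.
End Main.
Lemma initial n (M : 'M[int]_n) : \det M = 0 -> exists lam, Sgood M lam.
Proof.
move=> Hdet.
have /det0P [v Hv0 HvM] : \det M == 0 by apply/eqP.
have [j0 Hj0] : exists j, v 0 j != 0.
  apply: NNPP => H; move/negP: Hv0; apply; apply/eqP/matrixP => i j.
  rewrite mxE (ord1 i); case: (eqVneq (v 0 j) 0) => // Hj.
  by exfalso; apply: H; exists j.
set u := [seq z <- [seq v 0 j | j <- enum 'I_n] | z != 0].
have Hju : v 0 j0 \in u by rewrite mem_filter Hj0 /= map_f // mem_enum.
exists (sort geq [seq absz z | z <- u]).
have Hperm : perm_eq [seq absz z | z <- u] (sort geq [seq absz z | z <- u]).
  by rewrite perm_sym perm_sort perm_refl.
have Hsz : size (sort geq [seq absz z | z <- u]) = size u by rewrite size_sort size_map.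
split.
- apply/andP; split; first by apply: sort_sorted => a b; exact: leq_total.
  apply/allP => z; rewrite -(perm_mem Hperm) => /mapP [a Ha ->].
  by rewrite absz_gt0; move: Ha; rewrite mem_filter => /andP [].
- rewrite Hsz /u size_filter; apply: leq_trans (count_size _ _) _.
  by rewrite size_map size_enum_ord.
- apply: (vec_ok (r := fun p => v 0 p)) => //.
  + by rewrite Hsz size_filter.
  + by rewrite Hsz; case: (u) Hju.
  + by apply/mulmx0E.
Qed.

Unset Implicit Arguments.

Theorem mainTheorem2 (n : nat) (M : 'M[int]_n) :
  (forall i j, (M i j == 1) || (M i j == -1)) ->
  \det M = 0 ->
  exists lam : seq nat,
    [/\ novel lam, (size lam <= n)%N &
        exists v : 'rV[int]_n,
          inVn n lam [seq v 0 j | j <- enum 'I_n] /\ v *m M = 0].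
Proof.
move=> HM Hdet.
have [lam0 H0] := initial Hdet.
have [m0 [[lam1 [Hs1 Hm1]] Hmin]] :=
  @nat_min (fun m => exists lam, Sgood M lam /\ meas n lam = m)
    (ex_intro _ _ (ex_intro _ lam0 (conj H0 erefl))).
have [lam [[HS [Hm Hsz]] Hlex]] :=
  @lexmin (size lam1) (fun t => Sgood M t /\ meas n t = m0 /\ size t = size lam1)
    (fun t Ht => proj2 (proj2 Ht)) (ex_intro _ lam1 (conj Hs1 (conj Hm1 erefl))).
have Hminl : forall mu, Sgood M mu -> (meas n lam <= meas n mu)%N.
  by move=> mu Hmu; rewrite Hm; apply: Hmin; exists mu.
exists lam; case: (HS) => Hpart Hszn Hv; split => //.
split => //.
- exact: S_bperp HM HS.
- move=> Hc; exact: (min_nostrict HM HS Hminl Hc).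
- move=> mu Hmu Heq.
  have [HSmu Hmmu Hszmu] := min_equiv HM HS Hminl Hmu Heq.
  apply: Hlex; split => //; split; first by rewrite Hmmu.
  by rewrite Hszmu.
Qed.
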